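(* Let $H$ be a bialgebra over a commutative ring $k$ (with $\otimes=\otimes_k$, Sweedler notation $\Delta(h)=h_1\otimes h_2$). For a left $H$-module $M$ let $\theta_M\colon H\otimes H\otimes M\to H\otimes H\otimes M$, $\theta_M(a\otimes b\otimes m)=a_1b\otimes a_2\otimes m$. With $\mathrm T,\mathrm G,\mathrm V,\mathrm T^\theta$ and $\tilde\Lambda=\mathrm{id}\colon\mathrm V\mathrm T^\theta\Rightarrow\mathrm T\mathrm V$ as in the context: (1) The unique natural transformation $\tilde\Omega\colon\mathrm T^\theta\mathrm G\Rightarrow\mathrm G\mathrm T$ whose mate under $\mathrm V\dashv\mathrm G$ equals $\tilde\Lambda$ is given, for every left $H$-module $M$, by $\tilde\Omega_M(a\otimes b\otimes m)=\theta_M(a\otimes b\otimes m)=a_1b\otimes a_2\otimes m$. (2) For every left $H$-module $M$, $\tilde\Omega_M$ is a morphism of Hopf modules from $\mathrm T^\theta(\mathrm G(M))$ to $\mathrm G(\mathrm T(M))$. (3) If $H$ is a Hopf algebra with bijective antipode $S$, then $\theta_M$ is invertible with inverse $\theta_M^{-1}(a\otimes b\otimes m)=b_2\otimes S^{-1}(b_1)a\otimes m$; moreover, $\tilde\Omega$ implements an extension $\mathbb T^\theta$ of $\mathbb T$ through $\mathrm V\dashv\mathrm G$.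
   Context: ${}_H\mathrm{Mod}$ is the category of left $H$-modules; ${}^H_H\mathrm{Mod}$ is the category of (left-left) Hopf modules: left $H$-modules $M$ with a left $H$-comodule structure $m\mapsto m_{-1}\otimes m_0$ satisfying $(hm)_{-1}\otimes(hm)_0=h_1m_{-1}\otimes h_2m_0$, with morphisms the module-and-comodule maps. $\mathbb T$ is the comonad on ${}_H\mathrm{Mod}$ with $\mathrm T(M)=H\otimes M$ (free action $h'(h\otimes m)=h'h\otimes m$), $\Delta^{\mathbb T}_M(h\otimes m)=h\otimes1\otimes m$, $\varepsilon^{\mathbb T}_M(h\otimes m)=hm$ (induced by the free--forgetful adjunction with $k$-modules). $\mathrm V\colon{}^H_H\mathrm{Mod}\to{}_H\mathrm{Mod}$ is the forgetful functor, left adjoint to $\mathrm G\colon{}_H\mathrm{Mod}\to{}^H_H\mathrm{Mod}$, $\mathrm G(M)=H\otimes M$ with diagonal action $h(a\otimes m)=h_1a\otimes h_2m$ and coaction $\Delta\otimes\mathrm{id}_M$; the unit $\eta''$ of $\mathrm V\dashv\mathrm G$ is the coaction $\eta''_M(m)=m_{-1}\otimes m_0$ and the counit is $\varepsilon''_M=\varepsilon\otimes\mathrm{id}_M$. $\mathbb T^\theta$ is the comonad on ${}^H_H\mathrm{Mod}$ with $\mathrm T^\theta(M)=H\otimes M$ carrying the free action and the coaction $h\otimes m\mapsto h_1m_{-1}\otimes h_2\otimes m_0$, comultiplication $h\otimes m\mapsto h\otimes1\otimes m$ and counit $h\otimes m\mapsto hm$; thus $\mathrm V\mathrm T^\theta=\mathrm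 T\mathrm V$. The mate of $\tilde\Omega\colon\mathrm T^\theta\mathrm G\Rightarrow\mathrm G\mathrm T$ under $\mathrm V\dashv\mathrm G$ is $\varepsilon''\mathrm T\mathrm V\circ\mathrm V\tilde\Omega\mathrm V\circ\mathrm V\mathrm T^\theta\eta''$. ''$\tilde\Omega$ implements an extension $\mathbb T^\theta$ of $\mathbb T$'' means $\tilde\Omega$ is a natural isomorphism and $(\mathrm G,\tilde\Omega)$ is a lax morphism of comonads from $\mathbb T^\theta$ to $\mathbb T$: $\mathrm G\Delta^{\mathbb T}\circ\tilde\Omega=\tilde\Omega\mathrm T\circ\mathrm T^\theta\tilde\Omega\circ\Delta^{\mathbb T^\theta}\mathrm G$ and $\mathrm G\varepsilon^{\mathbb T}\circ\tilde\Omega=\varepsilon^{\mathbb T^\theta}\mathrm G$. *)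

(* Defs.v *)
From HB Require Import structures.
From mathcomp Require Import all_boot all_algebra.
From Stdlib Require Import ClassicalEpsilon.
Set Implicit Arguments.
Unset Strict Implicit.
Unset Printing Implicit Defensive.
Import GRing.Theory.
Local Open Scope ring_scope.

Section Tensor.
Variable k : comPzRingType.

Definition klinear (U W : lmodType k) (f : U -> W) : Prop :=
  forall (a : k) (x y : U), f (a *: x + y) = a *: f x + f y.

Definition kbilinear (U V W : lmodType k) (f : U -> V -> W) : Prop :=
  (forall v, klinear (fun u => f u v)) /\ (forall u, klinear (f u)).

Record tensor_product (U V : lmodType k) := TensorProduct {
  tp_carrier : lmodType k;
  tp_tmul : U -> V -> tp_carrier;
  tp_bilin : kbilinear tp_tmul;
  tp_exists : forall (W : lmodType k) (f : U -> V -> W), kbilinear f ->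
     exists g : tp_carrier -> W, klinear g /\ forall u v, g (tp_tmul u v) = f u v;
  tp_unique : forall (W : lmodType k) (g g' : tp_carrier -> W),
     klinear g -> klinear g' ->
     (forall u v, g (tp_tmul u v) = g' (tp_tmul u v)) -> forall t, g t = g' t
}.

Definition tensor_family := forall U V : lmodType k, tensor_product U V.

Variable tens : tensor_family.

Definition tensor (U V : lmodType k) : lmodType k := tp_carrier (tens U V).
Definition tmul (U V : lmodType k) (u : U) (v : V) : tensor U V :=
  tp_tmul (tens U V) u v.

(* The linear map U (x) V -> W induced by a bilinear f (junk if f is not
   bilinear). *)
Definition tlift (U V W : lmodType k) (f : U -> V -> W) : tensor U V -> W :=
  epsilon (inhabits (fun _ => 0))
    (fun g : tensor U V -> W => klinear g /\ forall u v, g (tmul u v) = f u v).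

Definition tmap (U V V' : lmodType k) (f : V -> V') : tensor U V -> tensor U V' :=
  tlift (fun u v => tmul u (f v)).

Variable H : algType k.

Definition is_bialgebra (Delta : H -> tensor H H) (eps : H -> k) : Prop :=
  [/\ klinear Delta,
      forall (a : k) (x y : H), eps (a *: x + y) = a * eps x + eps y,
      forall h : H,
        tlift (fun x y => tmul x (Delta y)) (Delta h)
        = tlift (fun x y => tlift (fun a b => tmul a (tmul b y)) (Delta x)) (Delta h),
      forall h : H, tlift (fun x y => eps x *: y) (Delta h) = h
        /\ tlift (fun x y => eps y *: x) (Delta h) = h
    & [/\ Delta 1 = tmul 1 1,
          forall a b : H, Delta (a * b)
            = tlift (fun x y => tlift (fun x' y' => tmul (x * x') (y * y'))
                                      (Delta b)) (Delta a),
          eps 1 = 1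
        & forall a b : H, eps (a * b) = eps a * eps b]].

Definition is_antipode (Delta : H -> tensor H H) (eps : H -> k) (S : H -> H) : Prop :=
  [/\ klinear S,
      forall h : H, tlift (fun x y => S x * y) (Delta h) = eps h *: 1
    & forall h : H, tlift (fun x y => x * S y) (Delta h) = eps h *: 1].

Variable Delta : H -> tensor H H.
Variable eps : H -> k.

Definition is_hmodule (M : lmodType k) (act : H -> M -> M) : Prop :=
  [/\ kbilinear act, forall m, act 1 m = m
    & forall a b m, act (a * b) m = act a (act b m)].

Definition is_hmodule_morphism (M M' : lmodType k) (act : H -> M -> M)
  (act' : H -> M' -> M') (f : M -> M') : Prop :=
  klinear f /\ forall a m, f (act a m) = act' a (f m).

Definition is_hopf_module (N : lmodType k) (act : H -> N -> N)
  (rho : N -> tensor H N) : Prop :=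
  [/\ is_hmodule act,
      klinear rho,
      forall n, tlift (fun x n0 => tlift (fun y z => tmul y (tmul z n0)) (Delta x)) (rho n)
                = tmap rho (rho n),
      forall n, tlift (fun x n0 => eps x *: n0) (rho n) = n
    &
      forall h n, rho (act h n)
        = tlift (fun h1 h2 => tlift (fun y n0 => tmul (h1 * y) (act h2 n0)) (rho n))
                (Delta h)].

Definition is_hopf_module_morphism (N N' : lmodType k)
  (act : H -> N -> N) (rho : N -> tensor H N)
  (act' : H -> N' -> N') (rho' : N' -> tensor H N') (f : N -> N') : Prop :=
  is_hmodule_morphism act act' f /\ forall n, rho' (f n) = tmap f (rho n).

(* T(M) = H (x) M with the free action *)
Definition free_act (M : lmodType k) (a : H) : tensor H M -> tensor H M :=
  tlift (fun x m => tmul (a * x) m).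

(* G(M) = H (x) M with the diagonal action and coaction Delta (x) id *)
Definition diag_act (M : lmodType k) (act : H -> M -> M) (a : H)
  : tensor H M -> tensor H M :=
  tlift (fun x m => tlift (fun a1 a2 => tmul (a1 * x) (act a2 m)) (Delta a)).

Definition G_coact (M : lmodType k) : tensor H M -> tensor H (tensor H M) :=
  tlift (fun x m => tlift (fun y z => tmul y (tmul z m)) (Delta x)).

(* T^theta(N) = H (x) N with free action and coaction
   h (x) n |-> h_1 n_{-1} (x) h_2 (x) n_0 *)
Definition Ttheta_coact (N : lmodType k) (rho : N -> tensor H N)
  : tensor H N -> tensor H (tensor H N) :=
  tlift (fun h n => tlift (fun h1 h2 =>
           tlift (fun y n0 => tmul (h1 * y) (tmul h2 n0)) (rho n)) (Delta h)).

(* comultiplication / counit of T (and of T^theta, same formulas) *)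
Definition T_comult (M : lmodType k) : tensor H M -> tensor H (tensor H M) :=
  tlift (fun h m => tmul h (tmul 1 m)).
Definition T_counit (M : lmodType k) (act : H -> M -> M) : tensor H M -> M :=
  tlift (fun h m => act h m).

(* counit of V -| G : eps (x) id *)
Definition G_counit (M : lmodType k) : tensor H M -> M :=
  tlift (fun x m => eps x *: m).

Definition theta (M : lmodType k) : tensor H (tensor H M) -> tensor H (tensor H M) :=
  tlift (fun a t => tlift (fun b m =>
           tlift (fun a1 a2 => tmul (a1 * b) (tmul a2 m)) (Delta a)) t).

Definition theta_inv (Sinv : H -> H) (M : lmodType k)
  : tensor H (tensor H M) -> tensor H (tensor H M) :=
  tlift (fun a t => tlift (fun b m =>
           tlift (fun b1 b2 => tmul b2 (tmul (Sinv b1 * a) m)) (Delta b)) t).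

Definition hmod_family := forall (M : lmodType k) (act : H -> M -> M),
  tensor H (tensor H M) -> tensor H (tensor H M).

(* Omega is a natural transformation T^theta G => G T between functors
   H-Mod -> Hopf modules: each component is a Hopf module morphism
   T^theta(G M) -> G(T M), natural in module maps f (on morphisms both
   functors act as id (x) id (x) f). *)
Definition is_nat_trans (Om : hmod_family) : Prop :=
  (forall (M : lmodType k) (act : H -> M -> M), is_hmodule act ->
     is_hopf_module_morphism
       (@free_act (tensor H M))
       (Ttheta_coact (G_coact (M:=M)))
       (diag_act (@free_act M))
       (@G_coact (tensor H M))
       (Om M act))
  /\
  (forall (M M' : lmodType k) (act : H -> M -> M) (act' : H -> M' -> M')
          (f : M -> M'),
     is_hmodule act -> is_hmodule act' -> is_hmodule_morphism act act' f ->
     forall u, Om M' act' (tmap (tmap f) u) = tmap (tmap f) (Om M act u)).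

Definition theta_fam : hmod_family := fun M (_ : H -> M -> M) => @theta M.

(* The mate of Omega under V -| G, at a Hopf module (N, act, rho):
   eps'' T V o V Omega V o V T^theta eta''. *)
Definition mate (Om : hmod_family) (N : lmodType k) (act : H -> N -> N)
  (rho : N -> tensor H N) : tensor H N -> tensor H N :=
  fun t => G_counit (Om N act (tmap rho t)).

Definition mate_is_id (Om : hmod_family) : Prop :=
  forall (N : lmodType k) (act : H -> N -> N) (rho : N -> tensor H N),
    is_hopf_module act rho -> forall t, mate Om act rho t = t.

Definition is_lax_comonad_morphism (Om : hmod_family) : Prop :=
  forall (M : lmodType k) (act : H -> M -> M), is_hmodule act ->
    (forall u, tmap (@T_comult M) (Om M act u)
               = Om (tensor H M) (@free_act M)
                    (tmap (Om M act) (@T_comult (tensor H M) u)))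
    /\ (forall u, tmap (T_counit act) (Om M act u)
                  = T_counit (diag_act act) u).

End Tensor.

(* Main.v *)
From HB Require Import structures.
From mathcomp Require Import all_boot all_algebra.
From Stdlib Require Import ClassicalEpsilon FunctionalExtensionality Setoid Morphisms.
Require Import Defs.
Set Implicit Arguments.
Unset Strict Implicit.
Unset Printing Implicit Defensive.
Import GRing.Theory.
Local Open Scope ring_scope.


Section Basics.
Variable k : comPzRingType.
Variable tens : tensor_family k.

Notation tm := (tmul tens).
Notation tl := (tlift (tens:=tens)).

Lemma tliftE (U V W : lmodType k) (f : U -> V -> W) :
  kbilinear f -> forall u v, tl f (tm u v) = f u v.
Proof.
move=> hf u v; rewrite /tlift.
set P := (fun g : tensor tens U V -> W => klinear g /\ forall u v, g (tmul tens u v) = f u v).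
have [g hg] := tp_exists (tens U V) hf.
have := epsilon_spec (inhabits (fun _ => 0)) P (ex_intro _ g hg).
by case=> _ ->.
Qed.

Lemma tlift_lin (U V W : lmodType k) (f : U -> V -> W) :
  kbilinear f -> klinear (tl f).
Proof.
move=> hf; rewrite /tlift.
set P := (fun g : tensor tens U V -> W => klinear g /\ forall u v, g (tmul tens u v) = f u v).
have [g hg] := tp_exists (tens U V) hf.
by have [] := epsilon_spec (inhabits (fun _ => 0)) P (ex_intro _ g hg).
Qed.

Lemma text (U V W : lmodType k) (g g' : tensor tens U V -> W) :
  klinear g -> klinear g' -> (forall u v, g (tm u v) = g' (tm u v)) ->
  forall t, g t = g' t.
Proof. exact: tp_unique. Qed.

Lemma tmul_bilin (U V : lmodType k) : kbilinear (@tmul k tens U V).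
Proof. exact: tp_bilin. Qed.

Lemma lin_id (U : lmodType k) : klinear (fun x : U => x).
Proof. by []. Qed.

Lemma lin_comp (P U W : lmodType k) (g : U -> W) (f : P -> U) :
  klinear g -> klinear f -> klinear (fun p => g (f p)).
Proof. by move=> hg hf a x y; rewrite hf hg. Qed.

Lemma lin_tmul_l (P U V : lmodType k) (f : P -> U) (v : V) :
  klinear f -> klinear (fun p => tm (f p) v).
Proof. move=> hf; apply: (lin_comp (g := fun u => tm u v)) hf; exact: (tmul_bilin U V).1. Qed.

Lemma lin_tmul_r (P U V : lmodType k) (f : P -> V) (u : U) :
  klinear f -> klinear (fun p => tm u (f p)).
Proof. move=> hf; apply: (lin_comp (g := fun v => tm u v)) hf; exact: (tmul_bilin U V).2. Qed.

Lemma lin_tlift_arg (P U V W : lmodType k) (g : U -> V -> W) (f : P -> tensor tens U V) :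
  kbilinear g -> klinear f -> klinear (fun p => tl g (f p)).
Proof. move=> hg hf; apply: (lin_comp (g := tl g)) hf; exact: tlift_lin. Qed.

Lemma lin_tlift_param (P U V W : lmodType k) (g : P -> U -> V -> W) (t : tensor tens U V) :
  (forall p, kbilinear (g p)) -> (forall x y, klinear (fun p => g p x y)) ->
  klinear (fun p => tl (g p) t).
Proof.
move=> hg hl a p q.
pose G1 := tl (g (a *: p + q)).
pose G2 := fun t => a *: tl (g p) t + tl (g q) t.
have lin2 : klinear G2.
  move=> c x y; rewrite /G2 !tlift_lin //.
  by rewrite !scalerDr !scalerA mulrC addrACA.
apply: (text (g := G1) (g' := G2)) => //; first exact: tlift_lin.
by move=> u v; rewrite /G1 /G2 !tliftE // hl.
Qed.

Lemma lin_scale (P U : lmodType k) (c : k) (f : P -> U) :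
  klinear f -> klinear (fun p => c *: f p).
Proof. by move=> hf a x y; rewrite hf scalerDr !scalerA mulrC. Qed.

Lemma lin_add (P U : lmodType k) (f g : P -> U) :
  klinear f -> klinear g -> klinear (fun p => f p + g p).
Proof. by move=> hf hg a x y; rewrite hf hg scalerDr addrACA. Qed.

Lemma lin_mulr (P : lmodType k) (A : algType k) (f : P -> A) (b : A) :
  klinear f -> klinear (fun p => f p * b).
Proof. by move=> hf a x y; rewrite hf mulrDl scalerAl. Qed.

Lemma lin_mull (P : lmodType k) (A : algType k) (f : P -> A) (b : A) :
  klinear f -> klinear (fun p => b * f p).
Proof. by move=> hf a x y; rewrite hf mulrDr scalerAr. Qed.

Lemma lin_escale (P U : lmodType k) (e : P -> k) (f : P -> U) (y : U) :
  (forall a x z, e (a *: x + z) = a * e x + e z) -> klinear (fun p => e p *: y).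
Proof. by move=> he a x z; rewrite he scalerDl scalerA. Qed.

Lemma lin0 (U W : lmodType k) (f : U -> W) : klinear f -> f 0 = 0.
Proof.
move=> hf; have h := hf 1 0 0; rewrite !scale1r addr0 in h.
have : f 0 + f 0 - f 0 = f 0 - f 0 by rewrite -h.
by rewrite addrK subrr.
Qed.

End Basics.

Lemma lin_escale2 (k : comPzRingType) (P A U : lmodType k) (e : A -> k) (f : P -> A) (y : U) :
  (forall a x z, e (a *: x + z) = a * e x + e z) -> klinear f -> klinear (fun p => e (f p) *: y).
Proof. by move=> he hf a x z; rewrite hf he scalerDl scalerA. Qed.

Ltac lin :=
  cbv beta;
  lazymatch goal with
  | |- kbilinear _ => split; lin
  | |- forall _, _ => intro; lin
  | |- klinear _ =>
    first
    [ exact: lin_id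
    | assumption
    | apply: lin_tmul_l; lin
    | apply: lin_tmul_r; lin
    | apply: lin_tlift_arg; lin
    | apply: lin_tlift_param; lin
    | apply: tlift_lin; lin
    | apply: lin_mulr; lin
    | apply: lin_mull; lin
    | apply: lin_escale2; [assumption | lin]
    | apply: lin_scale; lin
    | match goal with
      | h : klinear ?g |- klinear (fun p => ?g _) => apply: (lin_comp (g := g)); [exact h | lin]
      | h : kbilinear ?g |- klinear (fun p => ?g _ ?v) =>
          apply: (lin_comp (g := fun u => g u v)); [exact (h.1 v) | lin]
      | h : kbilinear ?g |- klinear (fun p => ?g ?u _) =>
          apply: (lin_comp (g := g u)); [exact (h.2 u) | lin]
      | h : kbilinear ?g |- klinear (?g ?u) => exact (h.2 u)
      end
    | match goal with h : _ |- klinear _ => solve [apply: h] end ]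
  end.


Section Calc.
Variable k : comPzRingType.
Variable tens : tensor_family k.
Notation tm := (tmul tens).
Notation tl := (tlift (tens:=tens)).

Lemma tlift_comp (U V W X : lmodType k) (g : W -> X) (f : U -> V -> W) t :
  klinear g -> kbilinear f -> g (tl f t) = tl (fun u v => g (f u v)) t.
Proof.
move=> hg hf; apply: (text (g := fun t => g (tl f t))); try lin.
by move=> u v; rewrite !tliftE //; lin.
Qed.

Lemma eq_tlift (U V W : lmodType k) (f g : U -> V -> W) :
  (forall u v, f u v = g u v) -> tl f = tl g.
Proof.
move=> h; have -> // : f = g.
by apply: functional_extensionality => u; apply: functional_extensionality => v.
Qed.

Lemma eq_tlift_pt (U V W : lmodType k) (f g : U -> V -> W) t :
  (forall u v, f u v = g u v) -> tl f t = tl g t.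
Proof. by move=> /eq_tlift ->. Qed.

Lemma tlift_swap (U1 V1 U2 V2 W : lmodType k) (F : U1 -> V1 -> U2 -> V2 -> W) t1 t2 :
  (forall y u v, klinear (fun x => F x y u v)) ->
  (forall x u v, klinear (fun y => F x y u v)) ->
  (forall x y v, klinear (fun u => F x y u v)) ->
  (forall x y u, klinear (fun v => F x y u v)) ->
  tl (fun x y => tl (F x y) t2) t1 = tl (fun u v => tl (fun x y => F x y u v) t1) t2.
Proof.
move=> h1 h2 h3 h4.
apply: (text (g := fun t1 => tl (fun x y => tl (F x y) t2) t1)
             (g' := fun t1 => tl (fun u v => tl (fun x y => F x y u v) t1) t2)); try lin.
move=> x y; rewrite tliftE; last lin.
by apply: eq_tlift_pt => u v; rewrite tliftE //; lin.
Qed.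

Lemma tmap_tmul (U V V' : lmodType k) (f : V -> V') u v :
  klinear f -> tmap (tens:=tens) (U:=U) f (tm u v) = tm u (f v).
Proof. by move=> hf; rewrite /tmap tliftE //; lin. Qed.

Lemma tmap_lin (U V V' : lmodType k) (f : V -> V') :
  klinear f -> klinear (tmap (tens:=tens) (U:=U) f).
Proof. by move=> hf; rewrite /tmap; lin. Qed.

End Calc.


#[export] Instance tlift_proper (k : comPzRingType) (tens : tensor_family k) (U V W : lmodType k) :
  Proper (pointwise_relation U (pointwise_relation V eq) ==> eq ==> eq) (@tlift k tens U V W).
Proof. move=> f g h t _ <-; apply: eq_tlift_pt => u v; exact: h. Qed.

Section Bialg.
Variable k : comPzRingType.
Variable tens : tensor_family k.
Variable H : algType k.
Variable Delta : H -> tensor tens H H.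
Variable eps : H -> k.
Hypothesis hbi : is_bialgebra Delta eps.
Notation tm := (tmul tens).
Notation tl := (tlift (tens:=tens)).

Lemma hD : klinear Delta. Proof. by case: hbi. Qed.
Lemma he : forall (a : k) (x y : H), eps (a *: x + y) = a * eps x + eps y.
Proof. by case: hbi. Qed.
Lemma hcoas h : tl (fun x y => tm x (Delta y)) (Delta h)
        = tl (fun x y => tl (fun a b => tm a (tm b y)) (Delta x)) (Delta h).
Proof. by case: hbi => _ _ ->. Qed.
Lemma hcl h : tl (fun x y => eps x *: y) (Delta h) = h.
Proof. by case: hbi => _ _ _ /(_ h) []. Qed.
Lemma hcr h : tl (fun x y => eps y *: x) (Delta h) = h.
Proof. by case: hbi => _ _ _ /(_ h) []. Qed.
Lemma hD1 : Delta 1 = tm 1 1. Proof. by case: hbi => _ _ _ _ []. Qed.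
Lemma hDM a b : Delta (a * b)
            = tl (fun x y => tl (fun x' y' => tm (x * x') (y * y')) (Delta b)) (Delta a).
Proof. by case: hbi => _ _ _ _ [] _ ->. Qed.
Lemma he1 : eps 1 = 1. Proof. by case: hbi => _ _ _ _ []. Qed.
Lemma heM a b : eps (a * b) = eps a * eps b. Proof. by case: hbi => _ _ _ _ []. Qed.

Ltac lin' := have := hD; have := he; intros; lin.

Lemma coassocF (W : lmodType k) (F : H -> H -> H -> W) h :
  (forall y z, klinear (fun x => F x y z)) ->
  (forall x z, klinear (fun y => F x y z)) ->
  (forall x y, klinear (fun z => F x y z)) ->
  tl (fun x y => tl (F x) (Delta y)) (Delta h)
  = tl (fun x y => tl (fun u v => F u v y) (Delta x)) (Delta h).
Proof.
move=> h1 h2 h3.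
pose Phi := tl (fun x (t : tensor tens H H) => tl (F x) t).
have hPhi : klinear Phi by rewrite /Phi; lin'.
have := congr1 Phi (hcoas h).
rewrite !tlift_comp //; try lin'.
have e1 : forall x y, Phi (tm x (Delta y)) = tl (F x) (Delta y).
  by move=> x y; rewrite /Phi tliftE //; lin'.
setoid_rewrite e1 => ->.
apply: eq_tlift_pt => x y; rewrite tlift_comp //; try lin'.
apply: eq_tlift_pt => u v; rewrite /Phi !tliftE //; lin'.
Qed.


Lemma linZ (U W : lmodType k) (F : U -> W) a y : klinear F -> F (a *: y) = a *: F y.
Proof. by move=> hF; have := hF a y 0; rewrite (lin0 hF) !addr0 => ->. Qed.
Lemma linD (U W : lmodType k) (F : U -> W) x y : klinear F -> F (x + y) = F x + F y.
Proof. by move=> hF; have := hF 1 x y; rewrite !scale1r => ->. Qed.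

Lemma counitL (W : lmodType k) (F : H -> W) h :
  klinear F -> tl (fun x y => eps x *: F y) (Delta h) = F h.
Proof.
move=> hF; rewrite -{2}(hcl h) tlift_comp //; try lin'.
by apply: eq_tlift_pt => x y; rewrite linZ.
Qed.

Lemma counitR (W : lmodType k) (F : H -> W) h :
  klinear F -> tl (fun x y => eps y *: F x) (Delta h) = F h.
Proof.
move=> hF; rewrite -{2}(hcr h) tlift_comp //; try lin'.
by apply: eq_tlift_pt => x y; rewrite linZ.
Qed.

Lemma mulF (W : lmodType k) (F : H -> H -> W) a b :
  kbilinear F -> tl F (Delta (a * b))
  = tl (fun x y => tl (fun x' y' => F (x * x') (y * y')) (Delta b)) (Delta a).
Proof.
move=> hF; rewrite hDM tlift_comp; try lin'.
apply: eq_tlift_pt => x y; rewrite tlift_comp; try lin'.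
by apply: eq_tlift_pt => x' y'; rewrite tliftE.
Qed.

Lemma text2 (U V W X : lmodType k) (g g' : tensor tens U (tensor tens V W) -> X) :
  klinear g -> klinear g' -> (forall u v w, g (tm u (tm v w)) = g' (tm u (tm v w))) ->
  forall t, g t = g' t.
Proof.
move=> hg hg' e; apply: text => // u.
apply: (text (g := fun t => g (tm u t)) (g' := fun t => g' (tm u t))); try lin.
exact: e.
Qed.

Lemma thetaE (M : lmodType k) a b (m : M) :
  theta Delta (tm a (tm b m)) = tl (fun a1 a2 => tm (a1 * b) (tm a2 m)) (Delta a).
Proof. by rewrite /theta !tliftE //; lin'. Qed.

Lemma theta_lin (M : lmodType k) : klinear (theta Delta (M:=M)).
Proof. rewrite /theta; lin'. Qed.

Lemma G_coactE (M : lmodType k) x (m : M) :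
  G_coact Delta (tm x m) = tl (fun y z => tm y (tm z m)) (Delta x).
Proof. by rewrite /G_coact !tliftE //; lin'. Qed.

Lemma G_coact_lin (M : lmodType k) : klinear (G_coact Delta (M:=M)).
Proof. rewrite /G_coact; lin'. Qed.

Lemma free_actE (M : lmodType k) (a x : H) (m : M) : free_act a (tm x m) = tm (a * x) m.
Proof. by rewrite /free_act !tliftE //; lin'. Qed.

Lemma free_act_lin (M : lmodType k) : kbilinear (free_act (tens:=tens) (H:=H) (M:=M)).
Proof. rewrite /free_act; lin'. Qed.

Lemma diag_actE (M : lmodType k) (act : H -> M -> M) a x m : kbilinear act ->
  diag_act Delta act a (tm x m) = tl (fun a1 a2 => tm (a1 * x) (act a2 m)) (Delta a).
Proof. by move=> ha; rewrite /diag_act !tliftE //; lin'. Qed.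

Lemma diag_act_lin (M : lmodType k) (act : H -> M -> M) : kbilinear act ->
  kbilinear (diag_act Delta act).
Proof. move=> ha; rewrite /diag_act; lin'. Qed.

Lemma TthetaE (N : lmodType k) (rho : N -> tensor tens H N) h n : klinear rho ->
  Ttheta_coact Delta rho (tm h n)
  = tl (fun h1 h2 => tl (fun y n0 => tm (h1 * y) (tm h2 n0)) (rho n)) (Delta h).
Proof. by move=> hr; rewrite /Ttheta_coact !tliftE //; lin'. Qed.

Lemma Ttheta_lin (N : lmodType k) (rho : N -> tensor tens H N) : klinear rho ->
  klinear (Ttheta_coact Delta rho).
Proof. move=> hr; rewrite /Ttheta_coact; lin'. Qed.

Lemma G_counitE (M : lmodType k) x (m : M) : G_counit eps (tm x m) = eps x *: m.
Proof. by rewrite /G_counit !tliftE //; lin'. Qed.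

Lemma G_counit_lin (M : lmodType k) : klinear (G_counit (tens:=tens) eps (M:=M)).
Proof. rewrite /G_counit; lin'. Qed.

End Bialg.


Section P2.
Variable k : comPzRingType.
Variable tens : tensor_family k.
Variable H : algType k.
Variable Delta : H -> tensor tens H H.
Variable eps : H -> k.
Hypothesis hbi : is_bialgebra Delta eps.
Notation tm := (tmul tens).
Notation tl := (tlift (tens:=tens)).
Ltac lin' := have := hD hbi; have := he hbi; intros; lin.

Lemma colin (M : lmodType k) (n : tensor tens H (tensor tens H M)) :
  G_coact Delta (theta Delta n) = tmap (theta Delta (M:=M)) (Ttheta_coact Delta (G_coact Delta (M:=M)) n).
Proof.
have hG := G_coact_lin hbi; have hT := theta_lin hbi.
move: n; apply: text2; try lin'.
move=> a b m.
rewrite (thetaE hbi) tlift_comp; try lin'.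
under eq_tlift => a1 a2.
  rewrite (G_coactE hbi) (mulF hbi); last lin'.
  over.
symmetry.
rewrite (TthetaE hbi) // tlift_comp; try lin'.
under eq_tlift => h1 h2.
  rewrite (G_coactE hbi) tlift_comp; try lin'.
  under eq_tlift => y z.
    rewrite tmap_tmul; last exact: hT.
    over.
  rewrite tlift_comp; try lin'.
  under eq_tlift => y z.
    rewrite tliftE; last lin'.
    rewrite (thetaE hbi).
    over.
  over.
under eq_tlift => h1 h2.
  under eq_tlift => y z.
    rewrite (tlift_comp (g := tm (h1 * y))); try lin'.
    over.
  rewrite tlift_swap; try lin'.
  over.
rewrite (coassocF hbi); try lin'.
by [].
Qed.

Lemma tmap_comp (U V W X : lmodType k) (f : W -> X) (g : V -> W) (t : tensor tens U V) :
  klinear f -> klinear g -> tmap f (tmap g t) = tmap (fun x => f (g x)) t.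
Proof.
move=> hf hg; move: t; apply: text; try (rewrite /tmap; lin').
by move=> u v; rewrite !tmap_tmul //; lin'.
Qed.

Lemma tmap_ext (U V W : lmodType k) (f g : V -> W) (t : tensor tens U V) :
  (forall x, f x = g x) -> tmap f t = tmap g t.
Proof. by move=> e; rewrite /tmap; apply: eq_tlift_pt => u v; rewrite e. Qed.

Lemma T_comultE (M : lmodType k) (h : H) (m : M) :
  T_comult (tens:=tens) (tm h m) = tm h (tm 1 m).
Proof. by rewrite /T_comult tliftE //; lin'. Qed.

Lemma T_counitE (M : lmodType k) (act : H -> M -> M) (h : H) (m : M) :
  kbilinear act -> T_counit act (tm h m) = act h m.
Proof. by move=> ha; rewrite /T_counit tliftE //; lin'. Qed.

Lemma theta_free (M : lmodType k) h u :
  theta Delta (free_act h u) = diag_act Delta (@free_act _ tens H M) h (theta Delta u).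
Proof.
have hf := free_act_lin hbi M; have hf2 := free_act_lin hbi (tensor tens H M).
move: u; apply: text2; try lin'.
move=> a b m.
rewrite (free_actE hbi) (thetaE hbi) (mulF hbi); try lin'.
symmetry; rewrite (thetaE hbi) tlift_comp; try lin'.
under eq_tlift => a1 a2.
  rewrite (diag_actE hbi) //.
  under eq_tlift => h1 h2 do rewrite (free_actE hbi).
  over.
rewrite tlift_swap; try lin'.
apply: eq_tlift_pt => x y; apply: eq_tlift_pt => x' y'.
by rewrite !mulrA.
Qed.

Lemma theta_nat (M M' : lmodType k) (f : M -> M') u : klinear f ->
  theta Delta (tmap (tmap f) u) = tmap (tmap f) (theta Delta u).
Proof.
move=> hf; have hf' := tmap_lin (tens:=tens) (U:=H) hf.
move: u; apply: text2; try lin'.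
move=> a b m.
rewrite !tmap_tmul // (thetaE hbi).
symmetry; rewrite (thetaE hbi) tlift_comp; try lin'.
by apply: eq_tlift_pt => x y; rewrite !tmap_tmul.
Qed.

Lemma theta_mate (N : lmodType k) (act : H -> N -> N) (rho : N -> tensor tens H N) :
  is_hopf_module Delta eps act rho -> forall t, G_counit eps (theta Delta (tmap rho t)) = t.
Proof.
case=> _ hr _ hcu _.
have hc := G_counit_lin hbi.
apply: text; try lin'.
move=> h n; rewrite tmap_tmul // {1}/theta tliftE; last lin'.
rewrite tlift_comp; try lin'.
under eq_tlift => b m.
  rewrite tlift_comp; try lin'.
  under eq_tlift => a1 a2.
    rewrite (G_counitE hbi) (heM hbi) -scalerA.
    over.
  rewrite (counitL hbi (F := fun y => eps b *: tm y m)); last lin'.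
  over.
rewrite -{2}(hcu n) (tlift_comp (g := tm h)); try lin'.
by apply: eq_tlift_pt => x y; rewrite (linZ (F := tm h)) //; lin'.
Qed.

Lemma lax1 (M : lmodType k) u :
  tmap (T_comult (M:=M)) (theta Delta u)
  = theta Delta (M:=tensor tens H M) (tmap (theta Delta (M:=M)) (T_comult (M:=tensor tens H M) u)).
Proof.
have hT := theta_lin hbi.
move: u; apply: text2; try lin'.
move=> a b m.
rewrite (thetaE hbi) tlift_comp; try (rewrite /T_comult; lin').
rewrite T_comultE tmap_tmul // (thetaE hbi) (hD1 hbi) tliftE; last lin'.
rewrite mul1r (thetaE hbi).
by apply: eq_tlift_pt => x y; rewrite tmap_tmul ?T_comultE //; rewrite /T_comult; lin'.
Qed.

Lemma lax2 (M : lmodType k) (act : H -> M -> M) u : kbilinear act ->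
  tmap (T_counit act) (theta Delta u) = T_counit (diag_act Delta act) u.
Proof.
move=> ha; have hd := diag_act_lin hbi ha.
move: u; apply: text2; try (rewrite /T_counit; lin').
move=> a b m.
rewrite (thetaE hbi) tlift_comp; try (rewrite /T_counit; lin').
rewrite T_counitE // (diag_actE hbi) //.
by apply: eq_tlift_pt => x y; rewrite tmap_tmul ?T_counitE //; rewrite /T_counit; lin'.
Qed.

End P2.


Section P3.
Variable k : comPzRingType.
Variable tens : tensor_family k.
Variable H : algType k.
Variable Delta : H -> tensor tens H H.
Variable eps : H -> k.
Hypothesis hbi : is_bialgebra Delta eps.
Notation tm := (tmul tens).
Notation tl := (tlift (tens:=tens)).
Ltac lin' := have := hD hbi; have := he hbi; intros; lin.

Lemma diag_hmod (M : lmodType k) (act : H -> M -> M) :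
  is_hmodule act -> is_hmodule (diag_act Delta act).
Proof.
case=> ha h1 hM; have hd := diag_act_lin hbi ha.
split => //.
  apply: text; try lin'.
  move=> b m; rewrite (diag_actE hbi) // (hD1 hbi) tliftE; last lin'.
  by rewrite mul1r h1.
move=> a b; apply: text; try lin'.
move=> c m; rewrite (diag_actE hbi) // (mulF hbi); last lin'.
symmetry; rewrite (diag_actE hbi) // tlift_comp; try lin'.
under eq_tlift => b1 b2.
  rewrite (diag_actE hbi) //.
  over.
rewrite tlift_swap; try lin'.
apply: eq_tlift_pt => x y; apply: eq_tlift_pt => x' y'.
by rewrite hM mulrA.
Qed.

Lemma diag_hopf (M : lmodType k) (act : H -> M -> M) :
  is_hmodule act -> is_hopf_module Delta eps (diag_act Delta act) (G_coact Delta (M:=M)).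
Proof.
move=> hm; have hdm := diag_hmod hm; case: hm => ha hu hM.
have hd := diag_act_lin hbi ha; have hG := G_coact_lin hbi.
split => //.
- apply: text; try lin'.
  move=> b m; rewrite (G_coactE hbi) tlift_comp; try lin'.
  under eq_tlift => y z.
    rewrite tliftE; last lin'.
    over.
  symmetry; rewrite tlift_comp; try lin'.
  under eq_tlift => y z.
    rewrite tmap_tmul // (G_coactE hbi) (tlift_comp (g := tm y)); try lin'.
    over.
  by rewrite (coassocF hbi); try lin'.
- apply: text; try lin'.
  move=> b m; rewrite (G_coactE hbi) tlift_comp; try lin'.
  under eq_tlift => y z.
    rewrite tliftE; last lin'.
    over.
  by rewrite (counitL hbi (F := fun z => tm z m)); try lin'.
- move=> h; apply: text; try lin'.
  move=> b m.
  rewrite (diag_actE hbi) // tlift_comp; try lin'.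
  under eq_tlift => h1 h2.
    rewrite (G_coactE hbi) (mulF hbi); last lin'.
    over.
  symmetry; rewrite (G_coactE hbi).
  under eq_tlift => h1 h2.
    rewrite tlift_comp; try lin'.
    under eq_tlift => y z.
      rewrite tliftE; last lin'.
      rewrite (diag_actE hbi) // (tlift_comp (g := tm (h1 * y))); try lin'.
      over.
    rewrite tlift_swap; try lin'.
    over.
  by rewrite (coassocF hbi); try lin'.
Qed.

Lemma G_counit_mor (M : lmodType k) (act : H -> M -> M) :
  is_hmodule act -> is_hmodule_morphism (diag_act Delta act) act (G_counit eps (M:=M)).
Proof.
case=> ha _ _; have hd := diag_act_lin hbi ha; have hc := G_counit_lin hbi (M:=M).
split => // a; apply: text; try lin'.
move=> b m; rewrite (diag_actE hbi) // tlift_comp; try lin'.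
under eq_tlift => x y.
  rewrite (G_counitE hbi) (heM hbi) -scalerA.
  over.
rewrite (counitL hbi (F := fun y => eps b *: act y m)); last lin'.
by rewrite (G_counitE hbi) (linZ (F := act a)) //; exact: ha.2.
Qed.

Lemma triangle (M : lmodType k) (n : tensor tens H M) :
  tmap (G_counit eps (M:=M)) (G_coact Delta n) = n.
Proof.
have hc := G_counit_lin hbi (M:=M).
move: n; apply: text; try lin'.
move=> b m; rewrite (G_coactE hbi) tlift_comp; try lin'.
under eq_tlift => y z.
  rewrite tmap_tmul // (G_counitE hbi) (linZ (F := tm y)); last lin'.
  over.
by rewrite (counitR hbi (F := fun y => tm y m)); try lin'.
Qed.

Lemma G_counit_tmap (U V : lmodType k) (g : U -> V) (X : tensor tens H U) :
  klinear g -> G_counit eps (tmap g X) = g (G_counit eps X).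
Proof.
move=> hg; have hc := G_counit_lin hbi; move: X; apply: text; try lin'.
by move=> x y; rewrite tmap_tmul // !(G_counitE hbi) linZ.
Qed.

Lemma G_counit_theta (M : lmodType k) (w : tensor tens H (tensor tens H M)) :
  G_counit eps (theta Delta w) = tmap (G_counit eps (M:=M)) w.
Proof.
have hc := G_counit_lin hbi; have hT := theta_lin hbi.
move: w; apply: text2; try lin'.
move=> a b m; rewrite (thetaE hbi) tlift_comp; try lin'.
under eq_tlift => x y.
  rewrite (G_counitE hbi) (heM hbi) -scalerA.
  over.
rewrite (counitL hbi (F := fun y => eps b *: tm y m)); last lin'.
by rewrite tmap_tmul // (G_counitE hbi) (linZ (F := tm a)) //; lin'.
Qed.


Lemma tmap_id (U V : lmodType k) (t : tensor tens U V) : tmap (fun x => x) t = t.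
Proof.
move: t; apply: (text (g := tmap (fun x => x))); try (rewrite /tmap; lin').
by move=> u v; rewrite tmap_tmul //; lin'.
Qed.

Lemma colin_repr (M : lmodType k) (F : tensor tens H (tensor tens H M) -> tensor tens H (tensor tens H M)) u :
  klinear F ->
  (forall n, G_coact Delta (F n) = tmap F (Ttheta_coact Delta (G_coact Delta (M:=M)) n)) ->
  F u = tmap (fun x => G_counit eps (F x)) (Ttheta_coact Delta (G_coact Delta (M:=M)) u).
Proof.
move=> hF hc.
rewrite -{1}(triangle (F u)) hc (tmap_comp hbi) //; rewrite /G_counit; lin'.
Qed.

Lemma uniqueness (Om : hmod_family tens H) :
  is_nat_trans Delta Om -> mate_is_id Delta eps Om ->
  forall (M : lmodType k) (act : H -> M -> M), is_hmodule act ->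
  forall u, Om M act u = theta Delta u.
Proof.
move=> [hmor hnat] hmate M act hm.
have [[hOl _] hOc] := hmor M act hm.
have key : forall w, G_counit eps (Om M act w) = tmap (G_counit eps (M:=M)) w.
  move=> w.
  have ew : w = tmap (tmap (G_counit eps (M:=M))) (tmap (G_coact Delta (M:=M)) w).
    rewrite (tmap_comp hbi); first last.
    - rewrite /G_coact; lin'.
    - apply: tmap_lin; rewrite /G_counit; lin'.
    rewrite (tmap_ext (g := fun x => x)) ?tmap_id // => x.
    exact: triangle.
  rewrite {1}ew (hnat _ _ _ _ _ (diag_hmod hm) hm (G_counit_mor hm)).
  rewrite G_counit_tmap; last by apply: tmap_lin; rewrite /G_counit; lin'.
  by have := hmate _ _ _ (diag_hopf hm) w; rewrite /mate => ->.
move=> u.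
rewrite (colin_repr (F := Om M act)) // (colin_repr (F := theta Delta (M:=M))); first last.
- move=> n. apply: (colin hbi n).
- exact: (theta_lin hbi).
apply: tmap_ext => x; by rewrite key G_counit_theta.
Qed.

End P3.


Section P4.
Variable k : comPzRingType.
Variable tens : tensor_family k.
Variable H : algType k.
Variable Delta : H -> tensor tens H H.
Variable eps : H -> k.
Hypothesis hbi : is_bialgebra Delta eps.
Variables S Sinv : H -> H.
Hypothesis hS : is_antipode Delta eps S.
Hypothesis hSK : cancel S Sinv.
Hypothesis hKS : cancel Sinv S.
Notation tm := (tmul tens).
Notation tl := (tlift (tens:=tens)).

Lemma hSl : klinear S. Proof. by case: hS. Qed.
Lemma hSL h : tl (fun x y => S x * y) (Delta h) = eps h *: 1. Proof. by case: hS => _ ->. Qed.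
Lemma hSR h : tl (fun x y => x * S y) (Delta h) = eps h *: 1. Proof. by case: hS => _ _ ->. Qed.

Ltac lin' := have := hD hbi; have := he hbi; have := hSl; intros; lin.

Lemma antiL_F (W : lmodType k) (F : H -> W) h :
  klinear F -> tl (fun a b => F (S a * b)) (Delta h) = F (eps h *: 1).
Proof. by move=> hF; rewrite -hSL tlift_comp //; lin'. Qed.

Lemma antiR_F (W : lmodType k) (F : H -> W) h :
  klinear F -> tl (fun a b => F (a * S b)) (Delta h) = F (eps h *: 1).
Proof. by move=> hF; rewrite -hSR tlift_comp //; lin'. Qed.

Lemma S1 : S 1 = 1.
Proof.
have := hSL 1; rewrite (hD1 hbi) tliftE; last lin'.
by rewrite mulr1 (he1 hbi) scale1r.
Qed.

Lemma Smul x y : S (x * y) = S y * S x.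
Proof.
pose P := tl (fun x1 x2 => tl (fun y1 y2 => tl (fun x21 x22 => tl (fun y21 y22 =>
            S (x1 * y1) * (x21 * (y21 * S y22) * S x22)) (Delta y2)) (Delta x2)) (Delta y)) (Delta x).
have eB : P = S (x * y).
  rewrite /P.
  under eq_tlift => x1 x2.
    under eq_tlift => y1 y2.
      under eq_tlift => x21 x22.
        rewrite (antiR_F (F := fun z => S (x1 * y1) * (x21 * z * S x22))); last lin'.
        rewrite mulr_algr -scalerAl -scalerAr.
        over.
      rewrite (antiR_F (F := fun z => eps y2 *: (S (x1 * y1) * z))); last lin'.
      rewrite -scalerAr mulr1.
      over.
    rewrite (counitR hbi (F := fun y1 => eps x2 *: S (x1 * y1))); last lin'.
    over.
  by rewrite (counitR hbi (F := fun x1 => S (x1 * y))); try lin'.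
have eA : P = S y * S x.
  rewrite /P.
  under eq_tlift => x1 x2.
    rewrite tlift_swap; try lin'.
    over.
  rewrite (coassocF hbi); try lin'.
  under eq_tlift => x1 x2.
    under eq_tlift => a b.
      rewrite (coassocF hbi); try lin'.
      over.
    rewrite tlift_swap; try lin'.
    under eq_tlift => y1 y2.
      under eq_tlift => a b.
        under eq_tlift => c d.
          rewrite -!mulrA [b * _]mulrA.
          over.
        over.
      rewrite -(mulF hbi (F := fun u v => S u * (v * (S y2 * S x2)))); last lin'.
      under eq_tlift => u v do rewrite mulrA.
      rewrite (antiL_F (F := fun z => z * (S y2 * S x2))); last lin'.
      rewrite (heM hbi) -scalerAl mul1r -scalerA.
      over.
    under eq_tlift => y1 y2 do rewrite scalerA mulrC -scalerA.
    rewrite (counitL hbi (F := fun y2 => eps x1 *: (S y2 * S x2))); last lin'.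
    over.
  by rewrite (counitL hbi (F := fun x2 => S y * S x2)); try lin'.
by rewrite -eB eA.
Qed.


Lemma Sinv_lin : klinear Sinv.
Proof.
move=> a x y; apply: (can_inj hSK).
by rewrite hSl !hKS.
Qed.

Lemma Sinv_mul x y : Sinv (x * y) = Sinv y * Sinv x.
Proof. by apply: (can_inj hSK); rewrite Smul !hKS. Qed.

Lemma S_scale1 c : S (c *: 1) = c *: 1.
Proof. by rewrite (linZ (F := S)) ?S1 //; exact: hSl. Qed.

Lemma K1 h : tl (fun a b => b * Sinv a) (Delta h) = eps h *: 1.
Proof.
apply: (can_inj hSK); rewrite S_scale1 tlift_comp; try (have := Sinv_lin; lin').
under eq_tlift => a b do rewrite Smul hKS.
exact: hSR.
Qed.

Lemma K2 h : tl (fun a b => Sinv b * a) (Delta h) = eps h *: 1.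
Proof.
apply: (can_inj hSK); rewrite S_scale1 tlift_comp; try (have := Sinv_lin; lin').
under eq_tlift => a b do rewrite Smul hKS.
exact: hSL.
Qed.

Ltac lin2 := have := Sinv_lin; lin'.

Lemma K1F (W : lmodType k) (F : H -> W) h :
  klinear F -> tl (fun a b => F (b * Sinv a)) (Delta h) = F (eps h *: 1).
Proof. by move=> hF; rewrite -K1 tlift_comp //; lin2. Qed.

Lemma K2F (W : lmodType k) (F : H -> W) h :
  klinear F -> tl (fun a b => F (Sinv b * a)) (Delta h) = F (eps h *: 1).
Proof. by move=> hF; rewrite -K2 tlift_comp //; lin2. Qed.

Lemma theta_invE (M : lmodType k) a b (m : M) :
  theta_inv Delta Sinv (tm a (tm b m)) = tl (fun b1 b2 => tm b2 (tm (Sinv b1 * a) m)) (Delta b).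
Proof. by rewrite /theta_inv !tliftE //; lin2. Qed.

Lemma theta_inv_lin (M : lmodType k) : klinear (theta_inv Delta Sinv (M:=M)).
Proof. rewrite /theta_inv; lin2. Qed.

Lemma theta_cancel (M : lmodType k) : cancel (theta Delta (M:=M)) (theta_inv Delta Sinv (M:=M)).
Proof.
have hT := theta_lin hbi; have hI := theta_inv_lin.
move=> u; move: u; apply: (text2 (g := fun u => theta_inv Delta Sinv (theta Delta u)) (g' := id)); try lin2.
move=> a b m /=.
rewrite (thetaE hbi) tlift_comp; try lin2.
under eq_tlift => a1 a2 do rewrite theta_invE.
rewrite (coassocF hbi); try lin2.
under eq_tlift => x y.
  under eq_tlift => u v do rewrite mulrA.
  rewrite (K2F (F := fun z => tm y (tm (z * b) m))); last lin2.
  rewrite -scalerAl mul1r (linZ (F := fun z => tm z m)); last lin2.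
  rewrite (linZ (F := tm y)); last lin2.
  over.
by rewrite (counitL hbi (F := fun y => tm y (tm b m))); try lin2.
Qed.

Lemma theta_cancel2 (M : lmodType k) : cancel (theta_inv Delta Sinv (M:=M)) (theta Delta (M:=M)).
Proof.
have hT := theta_lin hbi; have hI := theta_inv_lin.
move=> u; move: u; apply: (text2 (g := fun u => theta Delta (theta_inv Delta Sinv u)) (g' := id)); try lin2.
move=> a b m /=.
rewrite theta_invE tlift_comp; try lin2.
under eq_tlift => b1 b2 do rewrite (thetaE hbi).
rewrite (coassocF hbi); try lin2.
under eq_tlift => x y.
  under eq_tlift => u v do rewrite mulrA.
  rewrite (K1F (F := fun z => tm (z * a) (tm y m))); last lin2.
  rewrite -scalerAl mul1r (linZ (F := fun z => tm z (tm y m))); last lin2.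
  over.
by rewrite (counitL hbi (F := fun y => tm a (tm y m))); try lin2.
Qed.

End P4.

Theorem lemma4p1 (k : comPzRingType) (tens : tensor_family k) (H : algType k)
  (Delta : H -> tensor tens H H) (eps : H -> k) :
  is_bialgebra Delta eps ->
  (* (1) the unique natural Omega with mate id is theta *)
  [/\ is_nat_trans Delta (theta_fam Delta) /\ mate_is_id Delta eps (theta_fam Delta),
      (forall Om : hmod_family tens H,
         is_nat_trans Delta Om -> mate_is_id Delta eps Om ->
         forall (M : lmodType k) (act : H -> M -> M), is_hmodule act ->
         forall u, Om M act u = theta Delta u),
      (forall (M : lmodType k) (act : H -> M -> M), is_hmodule act ->
       forall (a b : H) (m : M),
         theta Delta (tmul tens a (tmul tens b m))
         = tlift (tens:=tens) (fun a1 a2 => tmul tens (a1 * b) (tmul tens a2 m)) (Delta a)),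
      (* (2) each theta_M is a morphism of Hopf modules T^theta G M -> G T M *)
      (forall (M : lmodType k) (act : H -> M -> M), is_hmodule act ->
         is_hopf_module_morphism
           (@free_act _ tens H (tensor tens H M))
           (Ttheta_coact Delta (G_coact Delta (M:=M)))
           (diag_act Delta (@free_act _ tens H M))
           (@G_coact _ tens H Delta (tensor tens H M))
           (theta Delta (M:=M)))
    & (* (3) *)
      forall (S Sinv : H -> H),
        is_antipode Delta eps S -> cancel S Sinv -> cancel Sinv S ->
        (forall (M : lmodType k) (act : H -> M -> M), is_hmodule act ->
           cancel (theta Delta (M:=M)) (theta_inv Delta Sinv (M:=M))
           /\ cancel (theta_inv Delta Sinv (M:=M)) (theta Delta (M:=M)))
        /\ is_lax_comonad_morphism Delta (theta_fam Delta)].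
Proof.
move=> hbi.
have part2 : forall (M : lmodType k) (act : H -> M -> M), is_hmodule act ->
         is_hopf_module_morphism
           (@free_act _ tens H (tensor tens H M))
           (Ttheta_coact Delta (G_coact Delta (M:=M)))
           (diag_act Delta (@free_act _ tens H M))
           (@G_coact _ tens H Delta (tensor tens H M))
           (theta Delta (M:=M)).
  move=> M act _; split; last by move=> n; apply: (colin hbi).
  split; first exact: (theta_lin hbi).
  by move=> a m; apply: (theta_free hbi).
have natT : is_nat_trans Delta (theta_fam Delta).
  split; first exact: part2.
  by move=> M M' act act' f _ _ [hf _] u; apply: (theta_nat hbi).
split => //.
- split => // N act rho hN t.
  exact: (theta_mate hbi hN t).
- exact: (uniqueness hbi).
- by move=> M act _ a b m; apply: (thetaE hbi).
- move=> S Sinv hS hSK hKS; split.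
  + move=> M act _; split.
    * exact: (theta_cancel hbi hS hSK hKS).
    * exact: (theta_cancel2 hbi hS hSK hKS).
  + move=> M act hm; split => u.
    * exact: (lax1 hbi).
    * by apply: (lax2 hbi); case: hm.
Qed.
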